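(* Let $k$ be a field of characteristic zero, let $n\ge 2$, and let $\mathcal{L}$ be a finite extension of the rational function field $k(\tau,\tau_2,\dots,\tau_n)$ in which $k$ is algebraically closed, given as $\mathcal{L}=k(\tau,\tau_2,\dots,\tau_n)(\alpha)$. Write the coefficients of the minimal polynomial of $\alpha$ over $k(\tau,\tau_2,\dots,\tau_n)$ as $p_i/q_i$ with $p_i,q_i\in k[\tau,\tau_2,\dots,\tau_n]$, and let $\kappa_0\subseteq k$ be the subfield generated by all coefficients of all the $p_i,q_i$. Let $k_1$ be the algebraic closure of $k(\tau_2,\dots,\tau_n)$ in $\mathcal{L}$. Then there exist a finite extension $\kappa\subseteq\mathcal{L}$ of $\kappa_0(\tau_2,\dots,\tau_n)$ and a finite extension $K\subseteq\mathcal{L}$ of $\kappa(\tau)$ such that the algebraic function field $\mathcal{L}/k_1$ is a constant field extension of $K/\kappa$.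
   Context: For subfields $\kappa\subseteq K$ and $\kappa\subseteq k_1$ of $\mathcal{L}$, ''$\mathcal{L}/k_1$ is a constant field extension of $K/\kappa$'' means that the compositum $Kk_1$ equals $\mathcal{L}$ and $k_1\cap K=\kappa$. *)

(* Defs.v *)
From HB Require Import structures.
From mathcomp Require Import all_boot all_order all_algebra.
From mathcomp Require Import mpoly.
Set Implicit Arguments. Unset Strict Implicit. Unset Printing Implicit Defensive.
Import Order.TTheory GRing.Theory Num.Theory.
Local Open Scope ring_scope.

Section FieldSets.
Variable F : fieldType.

Definition is_subfield (S : F -> Prop) : Prop :=
  [/\ S 0, S 1,
      (forall x y, S x -> S y -> S (x - y)),
      (forall x y, S x -> S y -> S (x * y)) &
      (forall x, S x -> S x^-1)].

Definition gen_field (A : F -> Prop) : F -> Prop :=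
  fun x => forall S, is_subfield S -> (forall y, A y -> S y) -> S x.

Definition poly_over (B : F -> Prop) (p : {poly F}) : Prop :=
  forall i, B p`_i.

Definition algebraic_over (B : F -> Prop) (x : F) : Prop :=
  exists2 p : {poly F}, p != 0 & poly_over B p /\ root p x.

Definition minpoly_over (B : F -> Prop) (x : F) (p : {poly F}) : Prop :=
  [/\ p \is monic, poly_over B p, root p x &
      forall q : {poly F}, q != 0 -> poly_over B q -> root q x ->
        (size p <= size q)%N].

Definition finite_ext (E B : F -> Prop) : Prop :=
  [/\ is_subfield E, is_subfield B, (forall x, B x -> E x) &
      exists s : seq F, (forall i, (i < size s)%N -> E s`_i) /\
        forall x, E x -> exists c : nat -> F,
          (forall i, B (c i)) /\ x = \sum_(i < size s) c i * s`_i].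

Definition alg_closed_in (B E : F -> Prop) : Prop :=
  forall x, E x -> algebraic_over B x -> B x.

Definition alg_closure_in (B : F -> Prop) : F -> Prop := algebraic_over B.

Definition constant_field_ext (E k1 K kappa : F -> Prop) : Prop :=
  (forall x, E x <-> gen_field (fun y => K y \/ k1 y) x) /\
  (forall x, (k1 x /\ K x) <-> kappa x).

End FieldSets.

(* Main.v *)
Require Import Defs.
From HB Require Import structures.
From mathcomp Require Import all_boot all_order all_algebra.
From mathcomp Require Import mpoly.
From mathcomp Require Import ring zify.
From Stdlib Require Import ClassicalEpsilon Classical.
Import GRing.Theory.
Local Open Scope ring_scope.

Module Aux.
Set Implicit Arguments. Unset Strict Implicit. Unset Printing Implicit Defensive.

Section Basics.
Variable F : fieldType.
Implicit Types (S A B : F -> Prop) (x y z : F).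

Section SF.
Variable S : F -> Prop.
Hypothesis hS : is_subfield S.
Lemma sf0 : S 0. Proof. by case: hS. Qed.
Lemma sf1 : S 1. Proof. by case: hS. Qed.
Lemma sfB x y : S x -> S y -> S (x - y). Proof. by case: hS => _ _ h _ _; apply: h. Qed.
Lemma sfM x y : S x -> S y -> S (x * y). Proof. by case: hS => _ _ _ h _; apply: h. Qed.
Lemma sfV x : S x -> S x^-1. Proof. by case: hS => _ _ _ _ h; apply: h. Qed.
Lemma sfN x : S x -> S (- x). Proof. by move=> h; rewrite -sub0r; apply: sfB => //; apply: sf0. Qed.
Lemma sfD x y : S x -> S y -> S (x + y).
Proof. by move=> a b; rewrite -(opprK y); apply: sfB => //; apply: sfN. Qed.
Lemma sfdiv x y : S x -> S y -> S (x / y).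
Proof. by move=> a b; apply: sfM => //; apply: sfV. Qed.
Lemma sfX x m : S x -> S (x ^+ m).
Proof. by move=> h; elim: m => [|m IH]; rewrite ?expr0 ?exprS; [apply: sf1| apply: sfM]. Qed.
Lemma sf_sum (I : Type) (r : seq I) (P : pred I) (f : I -> F) :
  (forall i, P i -> S (f i)) -> S (\sum_(i <- r | P i) f i).
Proof. by move=> h; apply: big_ind => //; [apply: sf0 | apply: sfD]. Qed.
Lemma sf_prod (I : Type) (r : seq I) (P : pred I) (f : I -> F) :
  (forall i, P i -> S (f i)) -> S (\prod_(i <- r | P i) f i).
Proof. by move=> h; apply: big_ind => //; [apply: sf1 | apply: sfM]. Qed.
End SF.

Lemma gen_sf A : is_subfield (gen_field A).
Proof.
split.
- by move=> S hS _; apply: (sf0 hS).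
- by move=> S hS _; apply: (sf1 hS).
- by move=> x y hx hy S hS hA; apply: (sfB hS) => //; [apply: hx | apply: hy].
- by move=> x y hx hy S hS hA; apply: (sfM hS) => //; [apply: hx | apply: hy].
- by move=> x hx S hS hA; apply: (sfV hS) => //; apply: hx.
Qed.
Lemma gen_base A x : A x -> gen_field A x.
Proof. by move=> h S _ hA; apply: hA. Qed.
Lemma gen_min A S : is_subfield S -> (forall y, A y -> S y) -> forall x, gen_field A x -> S x.
Proof. by move=> hS hA x hx; apply: hx. Qed.
Lemma gen_mono A B : (forall x, A x -> B x) -> forall x, gen_field A x -> gen_field B x.
Proof. by move=> h x hx; apply: gen_min (gen_sf B) _ x hx => y /h; apply: gen_base. Qed.

Inductive spanP S (s : seq F) : F -> Prop :=
| sp0 : spanP S s 0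
| spmem x : x \in s -> spanP S s x
| spD x y : spanP S s x -> spanP S s y -> spanP S s (x + y)
| spZ a x : S a -> spanP S s x -> spanP S s (a * x).

Definition closed_mul (V : F -> Prop) z := forall v, V v -> V (z * v).

Section Span.
Variable S : F -> Prop.
Hypothesis hS : is_subfield S.

Lemma sp_sum s (I : Type) (r : seq I) (P : pred I) (f : I -> F) :
  (forall i, P i -> spanP S s (f i)) -> spanP S s (\sum_(i <- r | P i) f i).
Proof. by move=> h; apply: big_ind => //; [apply: sp0 | apply: spD]. Qed.
Lemma spN s x : spanP S s x -> spanP S s (- x).
Proof. by move=> h; rewrite -mulN1r; apply: spZ => //; apply: (sfN hS) => //; apply: (sf1 hS). Qed.
Lemma spB s x y : spanP S s x -> spanP S s y -> spanP S s (x - y).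
Proof. by move=> a b; apply: spD => //; apply: spN. Qed.

Lemma sp_nil x : spanP S [::] x -> x = 0.
Proof. by elim=> [|y|y z _ -> _ ->|a y _ _ ->]; rewrite ?in_nil ?addr0 ?mulr0. Qed.

Lemma sp_cons x0 s y : spanP S (x0 :: s) y -> exists a, S a /\ spanP S s (y - a * x0).
Proof.
elim=> [|y' hy|y1 y2 _ [a1 [h1 s1]] _ [a2 [h2 s2]]|b y' hb _ [a [ha s1]]].
- by exists 0; split; [apply: (sf0 hS)|rewrite mul0r subr0; apply: sp0].
- rewrite in_cons in hy; case/orP: hy => [/eqP ->|hy].
  + by exists 1; split; [apply: (sf1 hS)|rewrite mul1r subrr; apply: sp0].
  + by exists 0; split; [apply: (sf0 hS)|rewrite mul0r subr0; apply: spmem].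
- exists (a1 + a2); split; first by apply: (sfD hS).
  have -> : y1 + y2 - (a1 + a2) * x0 = (y1 - a1 * x0) + (y2 - a2 * x0) by ring.
  by apply: spD.
- exists (b * a); split; first by apply: (sfM hS).
  have -> : b * y' - b * a * x0 = b * (y' - a * x0) by ring.
  by apply: spZ.
Qed.

Lemma sp_explicit s x : spanP S s x ->
  exists c : nat -> F, (forall i, S (c i)) /\ x = \sum_(i < size s) c i * s`_i.
Proof.
elim=> [|y hy|y1 y2 _ [c1 [h1 e1]] _ [c2 [h2 e2]]|a y ha _ [c [hc e]]].
- exists (fun _ => 0); split=> [i|]; first by apply: (sf0 hS).
  by rewrite big1 // => i _; rewrite mul0r.
- exists (fun i => (i == index y s)%:R); split=> [i|].
    by case: (i == _); [apply: (sf1 hS)| apply: (sf0 hS)].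
  have hi : (index y s < size s)%N by rewrite index_mem.
  rewrite (bigD1 (Ordinal hi)) //= eqxx mul1r nth_index // big1 ?addr0 //.
  move=> i hne; case: eqP => [he|]; last by rewrite mul0r.
  by exfalso; move/eqP: hne; apply; apply/val_inj.
- exists (fun i => c1 i + c2 i); split=> [i|]; first by apply: (sfD hS).
  by rewrite e1 e2 -big_split /=; apply: eq_bigr => i _; rewrite mulrDl.
- exists (fun i => a * c i); split=> [i|]; first by apply: (sfM hS).
  by rewrite e mulr_sumr; apply: eq_bigr => i _; rewrite mulrA.
Qed.

Lemma explicit_sp s (c : nat -> F) : (forall i, S (c i)) ->
  spanP S s (\sum_(i < size s) c i * s`_i).
Proof. by move=> h; apply: sp_sum => i _; apply: spZ => //; apply: spmem; apply: mem_nth. Qed.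


Lemma choice_nat (P : nat -> F -> Prop) : (forall i, exists a, P i a) -> exists f : nat -> F, forall i, P i (f i).
Proof.
move=> h; exists (fun i => proj1_sig (constructive_indefinite_description _ (h i))) => i.
exact: proj2_sig.
Qed.

Lemma sum_bump m i0 (f : nat -> F) : (i0 < m.+1)%N ->
  \sum_(i < m.+1) f i = f i0 + \sum_(j < m) f (bump i0 j).
Proof. by move=> h; rewrite (bigD1_ord (Ordinal h)). Qed.

Lemma bump_lt m j0 j : (j < m)%N -> (bump j0 j < m.+1)%N.
Proof. by rewrite /bump; case: (j0 <= j)%N => /=; rewrite ?add1n ?add0n; lia. Qed.

Lemma steinitz w : forall m (v : nat -> F), (size w < m)%N ->
  (forall i, (i < m)%N -> spanP S w (v i)) ->
  exists c : nat -> F, [/\ forall i, S (c i), exists2 i, (i < m)%N & c i != 0 &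
     \sum_(i < m) c i * v i = 0].
Proof.
elim: w => [|x0 w IH] m v hm hv.
  exists (fun _ => 1); split; first by move=> _; apply: (sf1 hS).
    by exists 0%N => //; exact: oner_neq0.
  by rewrite big1 // => i _; rewrite (sp_nil (hv i (ltn_ord i))) mulr0.
have [a ha] : exists a : nat -> F, forall i, (i < m)%N -> S (a i) /\ spanP S w (v i - a i * x0).
  suff h : forall i, exists b, (i < m)%N -> S b /\ spanP S w (v i - b * x0) by have [f hf] := choice_nat h; exists f.
  move=> i; case: (ltnP i m) => hi.
    by have [b hb] := sp_cons (hv i hi); exists b.
  by exists 0 => hlt; exfalso; move: hi hlt; lia.
case: (classic (exists2 i, (i < m)%N & a i != 0)) => [[j0 hj0 haj]|hno]; last first.
  have h0 : forall i, (i < m)%N -> a i = 0.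
    by move=> i hi; apply/eqP; apply/negPn/negP => hne; apply: hno; exists i.
  apply: IH => [|i hi]; first by move: hm => /=; lia.
  by have [_] := ha i hi; rewrite h0 // mul0r subr0.
case: m hm hv ha hj0 => [|m'] hm hv ha hj0; first by [].
pose v' j := v (bump j0 j) - (a (bump j0 j) / a j0) * v j0.
have hv' : forall j, (j < m')%N -> spanP S w (v' j).
  move=> j hj; have hb := bump_lt j0 hj.
  have -> : v' j = (v (bump j0 j) - a (bump j0 j) * x0) +
       (- (a (bump j0 j) / a j0)) * (v j0 - a j0 * x0).
    by rewrite /v'; field.
  apply: spD; first by case: (ha _ hb).
  apply: spZ; last by case: (ha _ hj0).
  by apply: (sfN hS); apply: (sfdiv hS); [case: (ha _ hb)| case: (ha _ hj0)].
have [c' [hc' [j1 hj1 hc'1] hs]] := IH m' v' (ltac:(move: hm => /=; lia)) hv'.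
exists (fun i => if i == j0 then - \sum_(j < m') c' j * (a (bump j0 j) / a j0)
                 else c' (unbump j0 i)); split.
- move=> i; case: (i == j0) => //; apply: (sfN hS); apply: (sf_sum hS) => j _.
  have hb := bump_lt j0 (ltn_ord j).
  by apply: (sfM hS) => //; apply: (sfdiv hS); [case: (ha _ hb)| case: (ha _ hj0)].
- exists (bump j0 j1); first exact: bump_lt.
  by rewrite [bump _ _ == _]eq_sym (negbTE (neq_bump _ _)) bumpK.
- rewrite (sum_bump (fun i => (if i == j0 then - \sum_(j < m') c' j * (a (bump j0 j) / a j0)
                 else c' (unbump j0 i)) * v i) hj0) /= eqxx.
  rewrite mulNr mulr_suml -sumrN -big_split /= -[RHS]hs; apply: eq_bigr => j _.
  rewrite (negbTE (_ : bump j0 j != j0)) ?bumpK; first by rewrite /v'; ring.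
  by rewrite eq_sym neq_bump.
Qed.

End Span.

Section Alg.
Variable S : F -> Prop.
Hypothesis hS : is_subfield S.

Lemma poly_over_lead p : poly_over S p -> S (lead_coef p).
Proof. by move=> h; rewrite lead_coefE; apply: h. Qed.

Lemma alg_base x : S x -> algebraic_over S x.
Proof.
move=> hx; exists ('X - x%:P); first by rewrite polyXsubC_eq0.
split; last by rewrite root_XsubC.
move=> i; rewrite coefB coefX coefC; case: i => [|[|i]] /=.
- by rewrite sub0r; apply: (sfN hS).
- by rewrite subr0; apply: (sf1 hS).
- by rewrite subr0; apply: (sf0 hS).
Qed.

Lemma size_root_gt1 (p : {poly F}) z : p != 0 -> root p z -> (1 < size p)%N.
Proof.
move=> hp hr; rewrite ltnNge; apply/negP => hs.
move: hp hr; rewrite (size1_polyC hs) polyC_eq0 rootC => h1 h2.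
by rewrite h2 in h1.
Qed.

Lemma root_top (p : {poly F}) z : p != 0 -> root p z ->
  z ^+ (size p).-1 = - ((lead_coef p)^-1 * \sum_(j < (size p).-1) p`_j * z ^+ j).
Proof.
move=> hp hr; have hs := size_root_gt1 hp hr.
move/rootP: hr; rewrite horner_coef.
have -> : size p = (size p).-1.+1 by rewrite prednK // ltnW.
rewrite big_ord_recr /= -lead_coefE => h.
have hl : lead_coef p != 0 by rewrite lead_coef_eq0.
apply: (mulfI hl); rewrite mulrN mulrA mulfV // mul1r.
by apply/eqP; rewrite -addr_eq0 addrC h.
Qed.

Lemma closed_alg s z : spanP S s 1 -> closed_mul (spanP S s) z -> algebraic_over S z.
Proof.
move=> h1 hz.
have hp : forall i, spanP S s (z ^+ i).
  by elim=> [|i IH]; rewrite ?expr0 ?exprS //; apply: hz.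
have [c [hc [j hj hcj] hsum]] := steinitz hS (v := fun i => z ^+ i) (ltnSn (size s)) (fun i _ => hp i).
exists (\poly_(i < (size s).+1) c i).
  apply/negP => /eqP /(congr1 (fun q : {poly F} => q`_j)).
  by rewrite coef_poly hj coef0; apply/eqP.
split.
  by move=> i; rewrite coef_poly; case: ifP => _ //; apply: (sf0 hS).
by apply/rootP; rewrite horner_poly.
Qed.

Section CM.
Variable s : seq F.
Local Notation V := (spanP S s).
Lemma cm_add x y : closed_mul V x -> closed_mul V y -> closed_mul V (x + y).
Proof. by move=> hx hy v hv; rewrite mulrDl; apply: spD; [apply: hx|apply: hy]. Qed.
Lemma cm_mul x y : closed_mul V x -> closed_mul V y -> closed_mul V (x * y).
Proof. by move=> hx hy v hv; rewrite -mulrA; apply: hx; apply: hy. Qed.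
Lemma cm_scale a x : S a -> closed_mul V x -> closed_mul V (a * x).
Proof. by move=> ha hx v hv; rewrite -mulrA; apply: spZ => //; apply: hx. Qed.
Lemma cm_N x : closed_mul V x -> closed_mul V (- x).
Proof. by move=> hx; rewrite -mulN1r; apply: cm_scale => //; apply: (sfN hS); apply: (sf1 hS). Qed.
Lemma cm_0 : closed_mul V 0.
Proof. by move=> v _; rewrite mul0r; apply: sp0. Qed.
Lemma cm_1 : closed_mul V 1.
Proof. by move=> v hv; rewrite mul1r. Qed.
Lemma cm_exp x i : closed_mul V x -> closed_mul V (x ^+ i).
Proof. by move=> hx; elim: i => [|i IH]; rewrite ?expr0 ?exprS; [apply: cm_1| apply: cm_mul]. Qed.
Lemma cm_sum (I : Type) (r : seq I) (P : pred I) (f : I -> F) :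
  (forall i, P i -> closed_mul V (f i)) -> closed_mul V (\sum_(i <- r | P i) f i).
Proof. by move=> h; apply: big_ind => //; [apply: cm_0| apply: cm_add]. Qed.
Lemma cm_horner q y : poly_over S q -> closed_mul V y -> closed_mul V q.[y].
Proof.
move=> hq hy; rewrite horner_coef; apply: cm_sum => i _.
by apply: cm_scale; [apply: hq| apply: cm_exp].
Qed.
Lemma sp_ring : (forall x, x \in s -> closed_mul V x) ->
  forall u, V u -> closed_mul V u.
Proof.
move=> h u; elim=> [|x hx|x y _ hx _ hy|a x ha _ hx].
- exact: cm_0.
- exact: h.
- exact: cm_add.
- exact: cm_scale.
Qed.
Lemma cm_gen x : (forall u, u \in s -> V (x * u)) -> closed_mul V x.
Proof.
move=> h v; elim=> [|u hu|u w _ hu _ hw|a u ha _ hu].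
- by rewrite mulr0; apply: sp0.
- exact: h.
- by rewrite mulrDr; apply: spD.
- by rewrite mulrCA; apply: spZ.
Qed.
End CM.

Definition finmod (P : F -> Prop) :=
  exists s, spanP S s 1 /\ forall x, P x -> closed_mul (spanP S s) x.

Lemma span_allpairs s1 s2 a b : spanP S s1 a -> spanP S s2 b ->
  spanP S [seq x * y | x <- s1, y <- s2] (a * b).
Proof.
move=> ha hb; elim: ha => [|x hx|x y _ hx _ hy|c x hc _ hx].
- by rewrite mul0r; apply: sp0.
- elim: hb => [|y hy|y1 y2 _ h1 _ h2|c y hc _ hy].
  + by rewrite mulr0; apply: sp0.
  + by apply: spmem; apply: allpairs_f.
  + by rewrite mulrDr; apply: spD.
  + by rewrite mulrCA; apply: spZ.
- by rewrite mulrDl; apply: spD.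
- by rewrite -mulrA; apply: spZ.
Qed.

Lemma finmod_union P1 P2 : finmod P1 -> finmod P2 -> finmod (fun x => P1 x \/ P2 x).
Proof.
move=> [s1 [h11 hc1]] [s2 [h12 hc2]].
exists [seq x * y | x <- s1, y <- s2]; split.
  by rewrite -(mulr1 1); apply: span_allpairs.
move=> x hx; apply: cm_gen => u /allpairsP [[a b] [ha hb ->]] /=.
case: hx => hx.
- rewrite mulrA; apply: span_allpairs; first by apply: hc1 => //; apply: spmem.
  by apply: spmem.
- rewrite mulrCA; apply: span_allpairs; first by apply: spmem.
  by apply: hc2 => //; apply: spmem.
Qed.

Lemma finmod_sub P1 P2 : (forall x, P2 x -> P1 x) -> finmod P1 -> finmod P2.
Proof. by move=> h [s [h1 hc]]; exists s; split => // x /h; apply: hc. Qed.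

Lemma alg_finmod x : algebraic_over S x -> finmod (eq x).
Proof.
move=> [p hp [hpo hr]]; have hs := size_root_gt1 hp hr.
pose N := (size p).-1.
have hN : (0 < N)%N by rewrite /N -ltnS prednK // ltnW.
exists (mkseq (fun i => x ^+ i) N); split.
  by apply: spmem; apply/mapP; exists 0%N; rewrite ?mem_iota ?expr0.
move=> y <-; apply: cm_gen => u /mapP [i]; rewrite mem_iota add0n => hi ->.
rewrite -exprS; case: (ltnP i.+1 N) => h.
  by apply: spmem; apply/mapP; exists i.+1; rewrite ?mem_iota.
have -> : i.+1 = N by move: h hi; rewrite leq0n /=; lia.
rewrite /N root_top //; apply: (spN hS); apply: spZ.
  by apply: (sfV hS); apply: poly_over_lead.
apply: sp_sum => j _; apply: spZ => //; apply: spmem; apply/mapP; exists (nat_of_ord j) => //.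
by rewrite mem_iota add0n leq0n ltn_ord.
Qed.

Lemma alg_inv_poly y : algebraic_over S y -> y != 0 ->
  exists q, poly_over S q /\ y^-1 = q.[y].
Proof.
move=> [p hp [hpo hr]] hy.
move: (leqnn (size p)); move: {2}(size p) => N.
elim: N p hp hpo hr => [|N IH] p hp hpo hr hsz.
  by move: hp; rewrite -size_poly_eq0; move: hsz; case: (size p).
pose q := \poly_(i < (size p).-1) p`_i.+1.
have hpq : p = q * 'X + (p`_0)%:P.
  apply/polyP => i; rewrite coefD coefMX coefC; case: i => [|i] /=; first by rewrite add0r.
  rewrite addr0 coef_poly; case: ltnP => // hi.
  by rewrite nth_default //; move: hi; case: (size p) => //= m; rewrite ltnS.
have hqo : poly_over S q.
  by move=> i; rewrite coef_poly; case: ifP => _; [apply: hpo| apply: (sf0 hS)].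
have hev : q.[y] * y + p`_0 = 0 by rewrite -hornerMXaddC -hpq; apply/rootP.
case: (eqVneq (p`_0) 0) => h0.
  apply: (IH q) => //.
  - apply/negP => /eqP hq0; move: hp; rewrite hpq hq0 h0 mul0r add0r.
    by rewrite eqxx.
  - apply/rootP; move: hev; rewrite h0 addr0 => /eqP; rewrite mulf_eq0 (negbTE hy) orbF.
    by move/eqP.
  - apply: leq_trans (size_poly _ _) _; move: hsz; case: (size p) => //= m.
exists ((- (p`_0)^-1) *: q); split.
  by move=> i; rewrite coefZ; apply: (sfM hS) => //; apply: (sfN hS); apply: (sfV hS); apply: hpo.
have e : q.[y] = - p`_0 / y.
  by apply: (mulIf hy); rewrite mulfVK //; apply/eqP; rewrite -addr_eq0 hev.
by rewrite hornerZ e; field; apply/andP.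
Qed.

Lemma finmod_list (bs : seq F) : (forall b, b \in bs -> algebraic_over S b) -> finmod (fun b => b \in bs).
Proof.
elim: bs => [|b bs IH] h.
  by exists [:: 1]; split => //; apply: spmem; rewrite inE.
apply: finmod_sub (finmod_union (alg_finmod (h b (mem_head _ _))) (IH _)).
  by move=> x; rewrite inE => /orP [/eqP ->|hx]; [left| right].
by move=> x hx; apply: h; rewrite inE hx orbT.
Qed.

Lemma alg_sub x y : algebraic_over S x -> algebraic_over S y -> algebraic_over S (x - y).
Proof.
move=> hx hy; have [s [h1 hc]] := finmod_union (alg_finmod hx) (alg_finmod hy).
apply: (closed_alg h1); apply: cm_add; first by apply: hc; left.
by apply: cm_N; apply: hc; right.
Qed.

Lemma alg_mul x y : algebraic_over S x -> algebraic_over S y -> algebraic_over S (x * y).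
Proof.
move=> hx hy; have [s [h1 hc]] := finmod_union (alg_finmod hx) (alg_finmod hy).
by apply: (closed_alg h1); apply: cm_mul; apply: hc; [left|right].
Qed.

Lemma alg_inv x : algebraic_over S x -> algebraic_over S x^-1.
Proof.
move=> hx; case: (eqVneq x 0) => [->|hx0]; first by rewrite invr0; apply: alg_base; apply: (sf0 hS).
have [q [hq ->]] := alg_inv_poly hx hx0.
have [s [h1 hc]] := alg_finmod hx.
by apply: (closed_alg h1); apply: cm_horner => //; apply: hc.
Qed.

Lemma alg_sf : is_subfield (algebraic_over S).
Proof.
split; [apply: alg_base; apply: (sf0 hS)|apply: alg_base; apply: (sf1 hS)| | |].
- exact: alg_sub.
- exact: alg_mul.
- exact: alg_inv.
Qed.

Lemma alg_trans T z : is_subfield T -> (forall x, T x -> algebraic_over S x) ->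
  algebraic_over T z -> algebraic_over S z.
Proof.
move=> hT hTS [p hp [hpo hr]].
have hs := size_root_gt1 hp hr.
pose N := (size p).-1.
have hN : (0 < N)%N by rewrite /N -ltnS prednK // ltnW.
pose c := (lead_coef p)^-1.
have [sb [h1 hcb]] : finmod (fun b : F => b \in c :: polyseq p).
  apply: finmod_list => b; rewrite inE => /orP [/eqP ->|hb].
    by apply: hTS; apply: (sfV hT); rewrite lead_coefE; apply: hpo.
  by apply: hTS; move/(nthP 0): hb => [i _ <-]; apply: hpo.
have hca : forall j, closed_mul (spanP S sb) p`_j.
  move=> j; case: (ltnP j (size p)) => hj.
    by apply: hcb; rewrite inE mem_nth ?orbT.
  by rewrite nth_default //; apply: cm_0.
have hcc : closed_mul (spanP S sb) c by apply: hcb; rewrite inE eqxx.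
have hzj : forall j, (j < N)%N -> z ^+ j \in mkseq (fun i => z ^+ i) N.
  by move=> j hj; apply/mapP; exists j; rewrite ?mem_iota.
apply: (closed_alg (s := [seq x * y | x <- sb, y <- mkseq (fun i => z ^+ i) N])).
  by rewrite -(mulr1 1); apply: span_allpairs => //; apply: spmem; rewrite -(expr0 z); apply: hzj.
apply: cm_gen => u /allpairsP [[w x] [hw hx ->]] /=.
move: hx => /= /mapP [i]; rewrite mem_iota add0n => hi ->.
rewrite mulrCA -exprS; case: (ltnP i.+1 N) => h.
  by apply: span_allpairs; apply: spmem => //; apply: hzj.
have -> : i.+1 = N by move: h hi; rewrite leq0n /=; lia.
rewrite /N root_top // -/c.
have -> : w * - (c * \sum_(j < (size p).-1) p`_j * z ^+ j) =
    \sum_(j < (size p).-1) (- (c * p`_j) * w) * z ^+ j.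
  by rewrite mulrN !mulr_sumr -sumrN; apply: eq_bigr => j _; ring.
apply: sp_sum => j _; apply: span_allpairs; last by apply: spmem; apply: hzj.
by apply: cm_N; [apply: cm_mul|apply: spmem].
Qed.

End Alg.

Lemma sf_inter S1 S2 : is_subfield S1 -> is_subfield S2 -> is_subfield (fun x => S1 x /\ S2 x).
Proof.
move=> h1 h2; split.
- by split; apply: sf0.
- by split; apply: sf1.
- by move=> x y [a b] [c d]; split; apply: sfB.
- by move=> x y [a b] [c d]; split; apply: sfM.
- by move=> x [a b]; split; apply: sfV.
Qed.

Section CMF.
Variable S : F -> Prop.
Hypothesis hS : is_subfield S.
Variable s : seq F.
Hypothesis h1 : spanP S s 1.

Lemma cm_field : is_subfield (closed_mul (spanP S s)).
Proof.
split.
- exact: cm_0.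
- exact: cm_1.
- by move=> x y hx hy; apply: cm_add => //; apply: (cm_N hS).
- exact: cm_mul.
- move=> x hx; case: (eqVneq x 0) => [->|hx0]; first by rewrite invr0; apply: cm_0.
  have [q [hq ->]] := alg_inv_poly hS (closed_alg hS h1 hx) hx0.
  exact: cm_horner.
Qed.

Lemma cm_in x : closed_mul (spanP S s) x -> spanP S s x.
Proof. by move=> hx; rewrite -(mulr1 x); apply: hx. Qed.

Lemma cm_S a : S a -> closed_mul (spanP S s) a.
Proof. by move=> ha; rewrite -(mulr1 a); apply: cm_scale => //; apply: cm_1. Qed.
End CMF.

Lemma alg_finmod_pow S x : is_subfield S -> algebraic_over S x ->
  exists s, [/\ spanP S s 1, closed_mul (spanP S s) x & forall y, y \in s -> exists i, y = x ^+ i].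
Proof.
move=> hS [p hp [hpo hr]]; have hs := size_root_gt1 hp hr.
pose N := (size p).-1.
have hN : (0 < N)%N by rewrite /N -ltnS prednK // ltnW.
exists (mkseq (fun i => x ^+ i) N); split.
- by apply: spmem; apply/mapP; exists 0%N; rewrite ?mem_iota ?expr0.
- apply: cm_gen => u /mapP [i]; rewrite mem_iota add0n => hi ->.
  rewrite -exprS; case: (ltnP i.+1 N) => h.
    by apply: spmem; apply/mapP; exists i.+1; rewrite ?mem_iota.
  have -> : i.+1 = N by move: h hi; rewrite leq0n /=; lia.
  rewrite /N root_top //; apply: (spN hS); apply: spZ.
    by apply: (sfV hS); apply: poly_over_lead.
  apply: sp_sum => j _; apply: spZ => //; apply: spmem; apply/mapP; exists (nat_of_ord j) => //.
  by rewrite mem_iota add0n leq0n ltn_ord.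
- by move=> y /mapP [i _ ->]; exists i.
Qed.

Section PolyOver.
Variable S : F -> Prop.
Hypothesis hS : is_subfield S.
Lemma po_add p q : poly_over S p -> poly_over S q -> poly_over S (p + q).
Proof. by move=> hp hq i; rewrite coefD; apply: (sfD hS). Qed.
Lemma po_sub p q : poly_over S p -> poly_over S q -> poly_over S (p - q).
Proof. by move=> hp hq i; rewrite coefB; apply: (sfB hS). Qed.
Lemma po_mul p q : poly_over S p -> poly_over S q -> poly_over S (p * q).
Proof. by move=> hp hq i; rewrite coefM; apply: (sf_sum hS) => j _; apply: (sfM hS). Qed.
Lemma po_C c : S c -> poly_over S c%:P.
Proof. by move=> hc i; rewrite coefC; case: ifP => _ //; apply: (sf0 hS). Qed.
Lemma po_X : poly_over S 'X.
Proof. by move=> i; rewrite coefX; case: (_ == _) => /=; rewrite ?mulr1n ?mulr0n; [apply: (sf1 hS)| apply: (sf0 hS)]. Qed.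
Lemma po_prod (I : Type) (r : seq I) (P : pred I) (f : I -> {poly F}) :
  (forall i, P i -> poly_over S (f i)) -> poly_over S (\prod_(i <- r | P i) f i).
Proof. by move=> h; apply: big_ind => //; [apply: po_C; apply: (sf1 hS)| apply: po_mul]. Qed.
End PolyOver.

End Basics.

Lemma choiceT (T : Type) (P : nat -> T -> Prop) : (forall i, exists a, P i a) -> exists f : nat -> T, forall i, P i (f i).
Proof.
move=> h; exists (fun i => proj1_sig (constructive_indefinite_description _ (h i))) => i.
exact: proj2_sig.
Qed.

Section Indep.
Variables (k L : fieldType) (iota : {rmorphism k -> L}) (n : nat) (t : 'I_n -> L) (i0 : 'I_n).
Hypothesis hindep : forall P : {mpoly k[n]}, (map_mpoly iota P).@[t] = 0 -> P = 0.

Definition ev (P : {mpoly k[n]}) := (map_mpoly iota P).@[t].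
Lemma evD P Q : ev (P + Q) = ev P + ev Q. Proof. by rewrite /ev rmorphD /= mevalD. Qed.
Lemma evB P Q : ev (P - Q) = ev P - ev Q. Proof. by rewrite /ev rmorphB /= mevalB. Qed.
Lemma evM P Q : ev (P * Q) = ev P * ev Q. Proof. by rewrite /ev rmorphM /= mevalM. Qed.
Lemma evC c : ev c%:MP = iota c. Proof. by rewrite /ev map_mpolyC mevalC. Qed.
Lemma ev1 : ev 1 = 1. Proof. by rewrite /ev rmorph1 meval1. Qed.
Lemma ev0 : ev 0 = 0. Proof. by rewrite /ev rmorph0 meval0. Qed.
Lemma evXU i : ev 'X_i = t i. Proof. by rewrite /ev map_mpolyX mevalXU. Qed.
Lemma evX P m : ev (P ^+ m) = ev P ^+ m.
Proof. by elim: m => [|m IH]; rewrite ?expr0 ?ev1 // !exprS evM IH. Qed.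
Lemma ev_sum (I : Type) (r : seq I) (Pr : pred I) (f : I -> {mpoly k[n]}) :
  ev (\sum_(i <- r | Pr i) f i) = \sum_(i <- r | Pr i) ev (f i).
Proof. by apply: (big_morph ev evD ev0). Qed.
Lemma ev_prod (I : Type) (r : seq I) (Pr : pred I) (f : I -> {mpoly k[n]}) :
  ev (\prod_(i <- r | Pr i) f i) = \prod_(i <- r | Pr i) ev (f i).
Proof. by apply: (big_morph ev evM ev1). Qed.

Definition sig0 : n.-tuple {mpoly k[n]} := [tuple (if i == i0 then 0 else 'X_i) | i < n].
Definition Ind (P : {mpoly k[n]}) := P \mPo sig0 = P.

Lemma IndD P Q : Ind P -> Ind Q -> Ind (P + Q). Proof. by rewrite /Ind comp_mpolyD => -> ->. Qed.
Lemma IndB P Q : Ind P -> Ind Q -> Ind (P - Q). Proof. by rewrite /Ind comp_mpolyB => -> ->. Qed.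
Lemma IndM P Q : Ind P -> Ind Q -> Ind (P * Q). Proof. by rewrite /Ind rmorphM /= => -> ->. Qed.
Lemma IndC c : Ind c%:MP. Proof. by rewrite /Ind comp_mpolyC. Qed.
Lemma IndXU j : j != i0 -> Ind 'X_j.
Proof. by move=> h; rewrite /Ind comp_mpolyXU -tnth_nth tnth_mktuple (negbTE h). Qed.
Lemma compX0 : 'X_i0 \mPo sig0 = 0.
Proof. by rewrite comp_mpolyXU -tnth_nth tnth_mktuple eqxx. Qed.

Lemma Ind_zero : forall m (H : nat -> {mpoly k[n]}), (forall j, Ind (H j)) ->
  \sum_(j < m) 'X_i0 ^+ j * H j = 0 -> forall j, (j < m)%N -> H j = 0.
Proof.
elim=> [|m IH] H hI hs j hj //.
move: hs; rewrite big_ord_recl /= expr0 mul1r.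
under eq_bigr => i _ do rewrite /bump /= add1n exprS -mulrA.
rewrite -mulr_sumr => hs.
have h0 : H 0%N = 0.
  by move: (congr1 (comp_mpoly sig0) hs); rewrite comp_mpolyD rmorphM /= compX0 mul0r addr0 hI comp_mpoly0.
have : 'X_i0 * \sum_(i < m) 'X_i0 ^+ i * H i.+1 = 0 by move: hs; rewrite h0 add0r.
move/eqP; rewrite mulf_eq0 => /orP [hX|/eqP hs'].
  by move: (congr1 (fun p : {mpoly k[n]} => p@_U_(i0)) (eqP hX)); rewrite mcoeffXU eqxx mcoeff0 => /eqP; rewrite oner_eq0.
case: j hj => [|j] hj //; apply: (IH (fun i => H i.+1)) => //.
Qed.


Definition Gf := gen_field (fun x => (exists c, x = iota c) \/ (exists2 j, j != i0 & x = t j)).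
Definition Rep x := exists P Q, [/\ Ind P, Ind Q, ev Q != 0 & x = ev P / ev Q].

Lemma Ind1 : Ind 1. Proof. by rewrite /Ind comp_mpoly1. Qed.
Lemma Ind0 : Ind 0. Proof. by rewrite /Ind comp_mpoly0. Qed.
Lemma Ind_prod (I : Type) (r : seq I) (Pr : pred I) (f : I -> {mpoly k[n]}) :
  (forall i, Pr i -> Ind (f i)) -> Ind (\prod_(i <- r | Pr i) f i).
Proof. by move=> h; apply: big_ind => //; [apply: Ind1| apply: IndM]. Qed.

Lemma Rep_base x : Rep x -> True. Proof. by []. Qed.

Lemma Rep_sf : is_subfield Rep.
Proof.
have h1 : ev 1 != 0 by rewrite ev1 oner_neq0.
split.
- by exists 0, 1; split; [apply: Ind0| apply: Ind1| exact: h1| rewrite ev0 mul0r].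
- by exists 1, 1; split; [apply: Ind1| apply: Ind1| exact: h1| rewrite ev1 divr1].
- move=> x y [P1 [Q1 [hP1 hQ1 hq1 ->]]] [P2 [Q2 [hP2 hQ2 hq2 ->]]].
  exists (P1 * Q2 - P2 * Q1), (Q1 * Q2); split.
  + by apply: IndB; apply: IndM.
  + exact: IndM.
  + by rewrite evM mulf_neq0.
  + by rewrite evB !evM; field; apply/andP.
- move=> x y [P1 [Q1 [hP1 hQ1 hq1 ->]]] [P2 [Q2 [hP2 hQ2 hq2 ->]]].
  exists (P1 * P2), (Q1 * Q2); split.
  + exact: IndM.
  + exact: IndM.
  + by rewrite evM mulf_neq0.
  + by rewrite !evM; field; apply/andP.
- move=> x [P [Q [hP hQ hq ->]]].
  case: (eqVneq (ev P) 0) => hp.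
    by exists 0, 1; split; [apply: Ind0| apply: Ind1| exact: h1| rewrite hp ev0 !mul0r invr0].
  exists Q, P; split => //; by rewrite invf_div.
Qed.

Lemma G_Rep x : Gf x -> Rep x.
Proof.
apply: (gen_min Rep_sf) => y [[c ->]|[j hj ->]].
- by exists c%:MP, 1; split; [apply: IndC| apply: Ind1| rewrite ev1 oner_neq0| rewrite evC ev1 divr1].
- by exists 'X_j, 1; split; [apply: IndXU| apply: Ind1| rewrite ev1 oner_neq0| rewrite evXU ev1 divr1].
Qed.

Lemma tau_trans (B : {poly L}) : poly_over Gf B -> B.[t i0] = 0 -> B = 0.
Proof.
move=> hB hr.
have [f hf] : exists f : nat -> {mpoly k[n]} * {mpoly k[n]}, forall i,
    [/\ Ind (f i).1, Ind (f i).2, ev (f i).2 != 0 & B`_i = ev (f i).1 / ev (f i).2].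
  suff h : forall i, exists PQ : {mpoly k[n]} * {mpoly k[n]},
      [/\ Ind PQ.1, Ind PQ.2, ev PQ.2 != 0 & B`_i = ev PQ.1 / ev PQ.2].
    by have [f hf] := choiceT h; exists f.
  by move=> i; have [P [Q hPQ]] := G_Rep (hB i); exists (P, Q).
pose m := size B.
pose H j := (f j).1 * \prod_(l < m | (l : nat) != j) (f l).2.
pose D := \prod_(l < m) (f l).2.
have hD : ev D != 0.
  by rewrite /D ev_prod; apply/prodf_neq0 => l _; case: (hf l).
have hH : forall j, (j < m)%N -> ev (H j) = B`_j * ev D.
  move=> j hj; rewrite /H /D evM !ev_prod [X in _ = _ * X](bigD1 (Ordinal hj)) //=.
  case: (hf j) => _ _ hq ->; rewrite mulrA divfK //; congr (_ * _).
have hI : forall j, Ind (H j).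
  by move=> j; apply: IndM; [case: (hf j)| apply: Ind_prod => l _; case: (hf l)].
pose R := \sum_(j < m) 'X_i0 ^+ j * H j.
have hR : R = 0.
  apply: hindep; rewrite -/(ev R) /R ev_sum.
  under eq_bigr => j _ do rewrite evM evX evXU hH // mulrA [t i0 ^+ _ * _]mulrC.
  by rewrite -mulr_suml -horner_coef hr mul0r.
have hz := Ind_zero hI hR.
apply/polyP => i; rewrite coef0; case: (ltnP i m) => hi; last by rewrite nth_default.
have := hH i hi; rewrite hz // ev0 => /esym/eqP; rewrite mulf_eq0 (negbTE hD) orbF.
by move/eqP.
Qed.

Lemma tau_not_alg : ~ algebraic_over Gf (t i0).
Proof. by move=> [B hB [hBo hr]]; move/eqP: hB; apply; apply: tau_trans => //; apply/rootP. Qed.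

Lemma tau_trans_k1 (B : {poly L}) : poly_over (algebraic_over Gf) B -> B.[t i0] = 0 -> B = 0.
Proof.
move=> hB hr; case: (eqVneq B 0) => // hB0; exfalso.
apply: tau_not_alg; apply: (alg_trans (gen_sf _) (T := algebraic_over Gf)).
- exact: alg_sf (gen_sf _).
- by [].
- by exists B => //; split => //; apply/rootP.
Qed.

End Indep.

Section Main.
Variables (k L : fieldType) (iota : {rmorphism k -> L}) (n : nat) (t : 'I_n -> L) (i0 : 'I_n).
Hypothesis hindep : forall P : {mpoly k[n]}, (map_mpoly iota P).@[t] = 0 -> P = 0.
Variables (alpha : L) (mu : {poly L}) (P Q : nat -> {mpoly k[n]}).
Hypothesis hmu : minpoly_over
           (gen_field (fun x => (exists c, x = iota c) \/ (exists j, x = t j)))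
           alpha mu.
Hypothesis hPQ : forall i, (i < size mu)%N ->
     mu`_i = (map_mpoly iota (P i)).@[t] / (map_mpoly iota (Q i)).@[t].

Definition kappa0 : k -> Prop :=
    gen_field (fun c => exists i, exists m : 'X_{1..n},
                 (i < size mu)%N /\ (c = (P i)@_m \/ c = (Q i)@_m)).
Definition Ef : L -> Prop :=
    gen_field (fun x => (exists c, kappa0 c /\ x = iota c) \/
                        (exists2 j, j != i0 & x = t j)).
Definition F0base x := (exists c, kappa0 c /\ x = iota c) \/ (exists j, x = t j).
Definition F0 := gen_field F0base.
Definition Kf := gen_field (fun x => F0base x \/ x = alpha).
Definition k1 := algebraic_over (Gf iota t i0).
Definition kappa x := k1 x /\ Kf x.

Lemma ev_F0 (R : {mpoly k[n]}) : (forall m, kappa0 R@_m) -> F0 (ev iota t R).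
Proof.
move=> h; rewrite /ev mevalE; apply: (sf_sum (gen_sf _)) => m _.
apply: (sfM (gen_sf _)).
  by apply: gen_base; left; exists R@_m; rewrite mcoeff_map_mpoly.
apply: (sf_prod (gen_sf _)) => i _; apply: (sfX (gen_sf _)).
by apply: gen_base; right; exists i.
Qed.

Lemma mu_F0 : poly_over F0 mu.
Proof.
move=> i; case: (ltnP i (size mu)) => hi; last by rewrite nth_default //; apply: (sf0 (gen_sf _)).
rewrite hPQ //; apply: (sfdiv (gen_sf _)); apply: ev_F0 => m; apply: gen_base; exists i, m; split => //.
- by left.
- by right.
Qed.

Lemma alpha_F0 : algebraic_over F0 alpha.
Proof.
case: hmu => hmon _ hr _; exists mu; first by apply: monic_neq0.
by split => //; apply: mu_F0.
Qed.

Lemma F0_K x : F0 x -> Kf x.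
Proof. by apply: gen_mono => y hy; left. Qed.
Lemma E_F0 x : Ef x -> F0 x.
Proof. by apply: gen_mono => y [h|[j _ ->]]; [left| right; exists j]. Qed.
Lemma E_G x : Ef x -> Gf iota t i0 x.
Proof. by apply: gen_mono => y [[c [_ ->]]|[j hj ->]]; [left; exists c| right; exists j]. Qed.
Lemma E_kappa x : Ef x -> kappa x.
Proof.
move=> h; split; last by apply: F0_K; apply: E_F0.
by apply: alg_base; [apply: gen_sf| apply: E_G].
Qed.
Lemma kappa_sf : is_subfield kappa.
Proof. by apply: sf_inter; [apply: alg_sf; apply: gen_sf| apply: gen_sf]. Qed.

Lemma K_span : exists s : seq L, (forall y, y \in s -> Kf y) /\ forall x, Kf x -> spanP F0 s x.
Proof.
have [s [h1 hc hs]] := alg_finmod_pow (gen_sf _) alpha_F0.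
exists s; split.
  move=> y /hs [i ->]; apply: (sfX (gen_sf _)); apply: gen_base; by right.
suff hh : forall x, Kf x -> closed_mul (spanP F0 s) x by move=> x hx; exact: (cm_in h1 (hh x hx)).
apply: (gen_min (cm_field (gen_sf _) h1)) => y [hy|->] //.
by apply: cm_S; apply: gen_base.
Qed.

Definition RepE x := exists f g : {poly L},
  [/\ poly_over Ef f, poly_over Ef g, g.[t i0] != 0 & x = f.[t i0] / g.[t i0]].

Lemma RepE_sf : is_subfield RepE.
Proof.
have hE := gen_sf (fun x => (exists c, kappa0 c /\ x = iota c) \/ (exists2 j, j != i0 & x = t j)).
have c1 : poly_over Ef 1 by apply: po_C => //; apply: (sf1 hE).
have c0 : poly_over Ef 0 by apply: po_C => //; apply: (sf0 hE).
have h1 : (1 : {poly L}).[t i0] != 0 by rewrite hornerC oner_neq0.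
split.
- by exists 0, 1; split => //; rewrite horner0 mul0r.
- by exists 1, 1; split => //; rewrite hornerC divr1.
- move=> x y [f1 [g1 [hf1 hg1 hq1 ->]]] [f2 [g2 [hf2 hg2 hq2 ->]]].
  exists (f1 * g2 - f2 * g1), (g1 * g2); split.
  + by apply: po_sub => //; apply: po_mul.
  + exact: po_mul.
  + by rewrite hornerM mulf_neq0.
  + by rewrite hornerD hornerN !hornerM; field; apply/andP.
- move=> x y [f1 [g1 [hf1 hg1 hq1 ->]]] [f2 [g2 [hf2 hg2 hq2 ->]]].
  exists (f1 * f2), (g1 * g2); split.
  + exact: po_mul.
  + exact: po_mul.
  + by rewrite hornerM mulf_neq0.
  + by rewrite !hornerM; field; apply/andP.
- move=> x [f [g [hf hg hq ->]]].
  case: (eqVneq f.[t i0] 0) => hp.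
    by exists 0, 1; split => //; rewrite hp horner0 !mul0r invr0.
  by exists g, f; split => //; rewrite invf_div.
Qed.

Lemma F0_RepE x : F0 x -> RepE x.
Proof.
have hE := gen_sf (fun x => (exists c, kappa0 c /\ x = iota c) \/ (exists2 j, j != i0 & x = t j)).
have c1 : poly_over Ef 1 by apply: po_C => //; apply: (sf1 hE).
have h1 : (1 : {poly L}).[t i0] != 0 by rewrite hornerC oner_neq0.
apply: (gen_min RepE_sf) => y hy.
have hc : forall z, Ef z -> RepE z.
  by move=> z hz; exists z%:P, 1; split => //; [apply: po_C| rewrite !hornerC divr1].
case: hy => [[c [hc0 ->]]|[j ->]].
  by apply: hc; apply: gen_base; left; exists c.
case: (eqVneq j i0) => [->|hj].
  by exists 'X, 1; split => //; [apply: po_X| rewrite hornerX hornerC divr1].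
by apply: hc; apply: gen_base; right; exists j.
Qed.


Lemma LD s (hsK : forall x, Kf x -> spanP F0 s x) m (c : nat -> L) :
  (size s < m)%N -> (forall i, (i < m)%N -> kappa (c i)) ->
  exists e : nat -> L, [/\ forall i, Ef (e i), exists2 i, (i < m)%N & e i != 0 &
     \sum_(i < m) e i * c i = 0].
Proof.
move=> hm hc.
have [r [hr [i1 hi1 hr1] hs]] :=
  steinitz (gen_sf F0base) (v := c) hm (fun i hi => hsK _ (proj2 (hc i hi))).
have [fg hfg] : exists fg : nat -> {poly L} * {poly L}, forall i,
    [/\ poly_over Ef (fg i).1, poly_over Ef (fg i).2, (fg i).2.[t i0] != 0 &
        r i = (fg i).1.[t i0] / (fg i).2.[t i0]].
  suff h : forall i, exists fg : {poly L} * {poly L},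
    [/\ poly_over Ef fg.1, poly_over Ef fg.2, fg.2.[t i0] != 0 &
        r i = fg.1.[t i0] / fg.2.[t i0]].
    by have [f hf] := choiceT h; exists f.
  by move=> i; have [f [g h]] := F0_RepE (hr i); exists (f, g).
pose D := \prod_(l < m) (fg l).2.[t i0].
have hD : D != 0 by apply/prodf_neq0 => l _; case: (hfg l).
pose h i := (fg i).1 * \prod_(l < m | (l : nat) != i) (fg l).2.
have hh : forall i, (i < m)%N -> (h i).[t i0] = r i * D.
  move=> i hi; rewrite /h /D hornerM horner_prod [X in _ = _ * X](bigD1 (Ordinal hi)) //=.
  case: (hfg i) => _ _ hq ->; rewrite mulrA divfK //; congr (_ * _).
have hE := gen_sf (fun x => (exists c, kappa0 c /\ x = iota c) \/ (exists2 j, j != i0 & x = t j)).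
have hpo : forall i, poly_over Ef (h i).
  by move=> i; apply: po_mul => //; [case: (hfg i)| apply: po_prod => // l _; case: (hfg l)].
pose A := \sum_(i < m) (c i)%:P * h i.
have hA : A = 0.
  apply: (tau_trans_k1 hindep).
  - move=> j; rewrite coef_sum; apply: (sf_sum (alg_sf (gen_sf _))) => i _.
    rewrite coefCM; apply: (sfM (alg_sf (gen_sf _))); first exact: (proj1 (hc i (ltn_ord i))).
    exact: (proj1 (E_kappa (hpo i j))).
  - rewrite horner_sum.
    under eq_bigr => i _ do rewrite hornerM hornerC hh // mulrA [c i * _]mulrC.
    by rewrite -mulr_suml hs mul0r.
have hne : h i1 != 0.
  by apply/negP => /eqP h0; move: (hh i1 hi1); rewrite h0 horner0 => /esym/eqP; rewrite mulf_eq0 (negbTE hr1) (negbTE hD).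
pose j := (size (h i1)).-1.
exists (fun i => (h i)`_j); split.
- by move=> i; apply: hpo.
- by exists i1 => //; rewrite -lead_coefE lead_coef_eq0.
- move: (congr1 (fun p : {poly L} => p`_j) hA); rewrite coef0 coef_sum => hz; rewrite -[RHS]hz.
  by apply: eq_bigr => i _; rewrite coefCM mulrC.
Qed.


Lemma max_nat (Qp : nat -> Prop) N : (forall j, Qp j -> (j <= N)%N) -> Qp 0%N ->
  exists j, Qp j /\ ~ Qp j.+1.
Proof.
move=> hb h0; apply: NNPP => hno.
have hall : forall j, Qp j.
  elim=> // j IH; apply: NNPP => hn; apply: hno; by exists j.
by have := hb _ (hall N.+1); rewrite ltnn.
Qed.

Lemma kappa_fin : finite_ext kappa Ef.
Proof.
have hE := gen_sf (fun x => (exists c, kappa0 c /\ x = iota c) \/ (exists2 j, j != i0 & x = t j)).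
split; [exact: kappa_sf| exact: hE| exact: E_kappa|].
have [s [_ hsK]] := K_span.
pose Indep j (c : nat -> L) := (forall i, (i < j)%N -> kappa (c i)) /\
   (forall e : nat -> L, (forall i, Ef (e i)) -> \sum_(i < j) e i * c i = 0 -> forall i, (i < j)%N -> e i = 0).
have [j [[c hc] hno]] : exists j, (exists c, Indep j c) /\ ~ (exists c, Indep j.+1 c).
  apply: (max_nat (N := size s)).
    move=> j [c [hk hi]]; rewrite leqNgt; apply/negP => hlt.
    have [e [he [i hi' hei] hs]] := LD hsK hlt hk.
    by move/eqP: hei; apply; apply: hi.
  by exists (fun _ => 0); split.
exists (mkseq c j); split.
  by move=> i; rewrite size_mkseq => hi; rewrite nth_mkseq //; apply: (proj1 hc).
move=> x hx.
pose c' i := if i == j then x else c i.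
case: (classic (exists e : nat -> L, (forall i, Ef (e i)) /\ \sum_(i < j.+1) e i * c' i = 0 /\ e j != 0))
  => [[e [he [hs hej]]]|hn]; last first.
  exfalso; apply: hno; exists c'; split.
    move=> i hi; rewrite /c'; case: eqP => // hij; apply: (proj1 hc).
    by move: hi hij; rewrite ltnS leq_eqVlt => /orP [/eqP -> //|].
  move=> e he hs.
  have hej : e j = 0.
    by apply: NNPP => hne; apply: hn; exists e; split => //; split => //; apply/eqP.
  move: hs; rewrite big_ord_recr /= hej mul0r addr0.
  under eq_bigr => i _ do rewrite /c' (ltn_eqF (ltn_ord i)).
  move=> hs i hi; move: hi; rewrite ltnS leq_eqVlt => /orP [/eqP -> //|hi].
  exact: (proj2 hc) e he hs i hi.
exists (fun i => - (e j)^-1 * e i); split.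
  by move=> i; apply: (sfM hE); [apply: (sfN hE); apply: (sfV hE); apply: he| apply: he].
move: hs; rewrite big_ord_recr /= /c' eqxx; clear -hej.
under eq_bigr => i _ do rewrite (ltn_eqF (ltn_ord i)).
move=> hs; rewrite size_mkseq.
under eq_bigr => i _ do rewrite nth_mkseq //.
have -> : x = - (e j)^-1 * \sum_(i < j) e i * c i.
  by apply: (mulfI hej); rewrite mulrA mulrN mulfV // mulN1r; apply/eqP; rewrite -addr_eq0 addrC hs.
by rewrite mulr_sumr; apply: eq_bigr => i _; rewrite mulrA.
Qed.

Lemma F0_sub_gen x : F0 x -> gen_field (fun x => kappa x \/ x = t i0) x.
Proof.
move: x; apply: (gen_min (gen_sf _)) => y [[c [hc ->]]|[j ->]].
  by apply: gen_base; left; apply: E_kappa; apply: gen_base; left; exists c.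
case: (eqVneq j i0) => [->|hj]; first by apply: gen_base; right.
by apply: gen_base; left; apply: E_kappa; apply: gen_base; right; exists j.
Qed.

Lemma K_fin : finite_ext Kf (gen_field (fun x => kappa x \/ x = t i0)).
Proof.
split; [exact: gen_sf| exact: gen_sf| |].
  apply: (gen_min (gen_sf _)) => y [[_ hy]|->] //.
  by apply: gen_base; left; right; exists i0.
have [s [hsK1 hsK]] := K_span.
exists s; split; first by move=> i hi; apply: hsK1; apply: mem_nth.
move=> x hx; have [c [hc ->]] := sp_explicit (gen_sf F0base) (hsK x hx).
by exists c; split => //; move=> i; apply: F0_sub_gen; apply: hc.
Qed.

Hypothesis hgen : forall x : L,
     gen_field (fun y => (exists c, y = iota c) \/ (exists j, y = t j)
                         \/ y = alpha) x.

Lemma cfe : constant_field_ext (fun _ => True) k1 Kf kappa.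
Proof.
split => x; last by [].
split => // _; move: x (hgen x); apply: (gen_min (gen_sf _)) => y [[c ->]|[[j ->]|->]].
- apply: gen_base; right; apply: alg_base; first exact: gen_sf.
  by apply: gen_base; left; exists c.
- by apply: gen_base; left; apply: gen_base; left; right; exists j.
- by apply: gen_base; left; apply: gen_base; right.
Qed.

End Main.

End Aux.
Import Aux.

Theorem proposition3p4
  (k L : fieldType) (iota : {rmorphism k -> L})
  (hchar : [pchar k] =i pred0)
  (n : nat) (hn : (2 <= n)%N)
  (t : 'I_n -> L) (i0 : 'I_n)
  (* tau := t i0 ; tau_2, ..., tau_n := t j for j != i0 ;
     they are algebraically independent over k *)
  (hindep : forall P : {mpoly k[n]}, (map_mpoly iota P).@[t] = 0 -> P = 0)
  (alpha : L)
  (* F := k(tau, tau_2, ..., tau_n) inside L *)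
  (halg : algebraic_over
            (gen_field (fun x => (exists c, x = iota c) \/ (exists j, x = t j)))
            alpha)
  (* L = F(alpha) *)
  (hgen : forall x : L,
     gen_field (fun y => (exists c, y = iota c) \/ (exists j, y = t j)
                         \/ y = alpha) x)
  (* k is algebraically closed in L *)
  (hkclosed : alg_closed_in (fun x => exists c, x = iota c) (fun _ => True))
  (* the minimal polynomial of alpha over F, with coefficients p_i / q_i *)
  (mu : {poly L})
  (hmu : minpoly_over
           (gen_field (fun x => (exists c, x = iota c) \/ (exists j, x = t j)))
           alpha mu)
  (P Q : nat -> {mpoly k[n]})
  (hQ : forall i, (i < size mu)%N -> (map_mpoly iota (Q i)).@[t] != 0)
  (hPQ : forall i, (i < size mu)%N ->
     mu`_i = (map_mpoly iota (P i)).@[t] / (map_mpoly iota (Q i)).@[t]) :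
  (* kappa0 : subfield of k generated by all coefficients of the p_i, q_i *)
  let kappa0 : k -> Prop :=
    gen_field (fun c => exists i, exists m : 'X_{1..n},
                 (i < size mu)%N /\ (c = (P i)@_m \/ c = (Q i)@_m)) in
  (* kappa0(tau_2, ..., tau_n) inside L *)
  let kappa0T : L -> Prop :=
    gen_field (fun x => (exists c, kappa0 c /\ x = iota c) \/
                        (exists2 j, j != i0 & x = t j)) in
  (* k1 : algebraic closure of k(tau_2, ..., tau_n) in L *)
  let k1 : L -> Prop :=
    alg_closure_in
      (gen_field (fun x => (exists c, x = iota c) \/
                           (exists2 j, j != i0 & x = t j))) in
  exists kappa K : L -> Prop,
    [/\ finite_ext kappa kappa0T,
        finite_ext K (gen_field (fun x => kappa x \/ x = t i0)) &
        constant_field_ext (fun _ => True) k1 K kappa].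
Proof.
move=> kappa0' kappa0T k1'.
exists (kappa iota t i0 alpha mu P Q), (Kf iota t alpha mu P Q); split.
- exact: (kappa_fin i0 hindep hmu hPQ).
- exact: (K_fin i0 hmu hPQ).
- exact: (cfe i0 mu P Q hgen).
Qed.
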